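(* The icosahedral graph (the 1-skeleton of the regular icosahedron, a 5-regular graph on 12 vertices) is diagonal.
   Context: $d$ denotes the shortest-path distance. For vertices $x_0,\dots,x_k$ put $\ell(x_0,\dots,x_k)=\sum_{i=0}^{k-1}d(x_i,x_{i+1})$. The magnitude chain complex: $\mathrm{MC}_{k,l}(G)$ is the free abelian group on $I_{k,l}(G)=\{(x_0,\dots,x_k)\in V(G)^{k+1}: x_i\neq x_{i+1}\ \forall i,\ \ell(x_0,\dots,x_k)=l\}$, with differential $\partial=\sum_{i=1}^{k-1}(-1)^i\partial_i:\mathrm{MC}_{k,l}\to\mathrm{MC}_{k-1,l}$, where $\partial_i(x_0,\dots,x_k)=(x_0,\dots,\hat x_i,\dots,x_k)$ if deleting $x_i$ does not change $\ell$, and $0$ otherwise. Magnitude homology: $\mathrm{MH}_{k,l}(G)=H_k(\mathrm{MC}_{*,l}(G))$. $G$ is diagonal if $\mathrm{MH}_{k,l}(G)=0$ whenever $k\ne l$. *)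

(* Defs.v *)
From HB Require Import structures.
From mathcomp Require Import all_boot all_order all_algebra.
Set Implicit Arguments. Unset Strict Implicit. Unset Printing Implicit Defensive.
Import Order.TTheory GRing.Theory Num.Theory.

Fixpoint ball (V : finType) (e : rel V) (k : nat) (x : V) : {set V} :=
  match k with
  | 0 => [set x]
  | k'.+1 => ball e k' x :|: [set y | [exists z, (z \in ball e k' x) && e z y]]
  end.

(* For a
   connected graph the distance is < #|V|, so searching k in 0..#|V|-1 is
   exact (if y is unreachable this returns #|V|; irrelevant for connected
   graphs such as the icosahedral graph). *)
Definition gdist (V : finType) (e : rel V) (x y : V) : nat :=
  find (fun k => y \in ball e k x) (iota 0 #|V|).

Fixpoint glen (V : finType) (e : rel V) (s : seq V) : nat :=
  match s with
  | x :: ((y :: _) as s') => gdist e x y + glen e s'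
  | _ => 0
  end.

Definition adj_distinct (V : finType) (s : seq V) : bool :=
  if s is x :: s' then path (fun a b => a != b) x s' else false.

Definition inI (V : finType) (e : rel V) (k l : nat) (s : seq V) : bool :=
  [&& size s == k.+1, adj_distinct s & glen e s == l].

Definition face (V : Type) (i : nat) (s : seq V) : seq V :=
  take i s ++ drop i.+1 s.

(* A chain is an integer-valued function on sequences; an element of
   MC_{k,l} is such a function supported on I_{k,l} (a finite set). *)
Definition chain (V : finType) := seq V -> int.

Definition supported (V : finType) (e : rel V) (k l : nat) (c : chain V) : Prop :=
  forall s, c s != 0%R -> inI e k l s.

(* coefficient of t in  d(s) = sum_{i=1}^{k-1} (-1)^i d_i(s), for s of length k+1 *)
Definition bd_coeff (V : finType) (e : rel V) (k : nat) (s t : seq V) : int :=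
  (\sum_(1 <= i < k)
     if (face i s == t) && (glen e (face i s) == glen e s)
     then (-1) ^+ i else 0)%R.

Definition bd (V : finType) (e : rel V) (k : nat) (c : chain V) : chain V :=
  fun t => (\sum_(s : (k.+1).-tuple V) c (tval s) * bd_coeff e k (tval s) t)%R.

Definition MH_vanishes (V : finType) (e : rel V) (k l : nat) : Prop :=
  forall c : chain V, supported e k l c -> (forall t, bd e k c t = 0%R) ->
    exists b : chain V, supported e k.+1 l b /\ (forall t, bd e k.+1 b t = c t).

Definition diagonal (V : finType) (e : rel V) : Prop :=
  forall k l : nat, k != l -> MH_vanishes e k l.

(* Vertices 0..11: 0 = top, 1..5 upper pentagon, 6..10 lower pentagon,
   11 = bottom; upper i is joined to lower 5+i and 5+(i mod 5)+1. *)
Definition ico_adj_nat (a b : nat) : bool :=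
  [|| (a == 0) && (1 <= b <= 5),
      (1 <= a <= 5) && (b == (a %% 5).+1),
      (6 <= a <= 10) && (b == ((a - 5) %% 5).+1 + 5),
      (1 <= a <= 5) && ((b == a + 5) || (b == (a %% 5).+1 + 5))
    | (a == 11) && (6 <= b <= 10)].

Definition ico_edge : rel 'I_12 :=
  fun x y => ico_adj_nat x y || ico_adj_nat y x.

(* Main.v *)
Require Import Defs.
Set Warnings "-notation-overridden,-ambiguous-paths".
From mathcomp Require Import all_boot all_order all_algebra.
From mathcomp Require Import zify.
Set Implicit Arguments. Unset Strict Implicit. Unset Printing Implicit Defensive.
Import GRing.Theory.

Definition Dtab : seq (seq nat) := [:: [:: 0; 1; 1; 1; 1; 1; 2; 2; 2; 2; 2; 3]; [:: 1; 0; 1; 2; 2; 1; 1; 1; 2; 3; 2; 2]; [:: 1; 1; 0; 1; 2; 2; 2; 1; 1; 2; 3; 2]; [:: 1; 2; 1; 0; 1; 2; 3; 2; 1; 1; 2; 2]; [:: 1; 2; 2; 1; 0; 1; 2; 3; 2; 1; 1; 2]; [:: 1; 1; 2; 2; 1; 0; 1; 2; 3; 2; 1; 2]; [:: 2; 1; 2; 3; 2; 1; 0; 1; 2; 2; 1; 1]; [:: 2; 1; 1; 2; 3; 2; 1; 0; 1; 2; 2; 1]; [:: 2; 2; 1; 1; 2; 3; 2; 1; 0; 1; 2; 1]; [:: 2; 3; 2; 1; 1; 2; 2; 2; 1; 0; 1; 1]; [:: 2; 2; 3; 2; 1; 1; 1; 2; 2; 1; 0; 1]; [:: 3; 2; 2;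 2; 2; 2; 1; 1; 1; 1; 1; 0]].
Definition STtab : seq (seq (seq nat)) := [:: [:: [:: 0; 0; 0; 0; 0; 0; 1; 2; 2; 4; 5; 2]; [:: 1; 1; 1; 0; 5; 1; 1; 1; 2; 5; 5; 7]; [:: 2; 2; 2; 2; 0; 1; 1; 2; 2; 3; 1; 8]; [:: 3; 2; 3; 3; 3; 0; 2; 2; 3; 3; 4; 9]; [:: 4; 0; 3; 4; 4; 4; 5; 3; 3; 4; 4; 10]; [:: 5; 5; 0; 4; 5; 5; 5; 1; 4; 4; 5; 6]; [:: 5; 6; 1; 5; 5; 6; 6; 6; 7; 11; 6; 6]; [:: 1; 7; 7; 2; 6; 6; 7; 7; 7; 8; 6; 7]; [:: 2; 7; 8; 8; 3; 7; 7; 8; 8; 8; 9; 8]; [:: 3; 8; 8; 9; 9; 4; 10; 8; 9; 9; 9; 9]; [:: 4; 5; 9; 9; 10; 10; 10; 6; 9; 10; 10; 10]; [:: 10; 6; 7; 8; 10; 10; 11; 11; 11; 11; 11; 11]]; [:: [:: 0; 0; 0; 0; 0; 0; 1; 2; 2; 4; 5; 2]; [:: 1; 1; 1; 0; 5; 1; 1; 1; 2; 5; 5; 7]; [:: 2; 2; 2; 2; 0; 1; 7; 2; 2; 3; 7; 7]; [:: 3; 2; 3; 3; 3; 0; 2; 2; 3; 3; 4; 9]; [:: 4; 0; 3; 4; 4; 4; 5; 3; 3; 4; 4; 10]; [:: 5; 5; 0; 0; 5; 5; 5; 1; 0; 10; 5; 6]; [:: 5; 6; 1; 5; 5; 6;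 6; 6; 7; 11; 6; 6]; [:: 1; 7; 7; 2; 6; 6; 7; 7; 7; 8; 6; 7]; [:: 2; 7; 8; 8; 3; 7; 7; 8; 8; 8; 9; 8]; [:: 3; 8; 8; 9; 9; 4; 10; 8; 9; 9; 9; 9]; [:: 4; 5; 9; 9; 10; 10; 10; 6; 9; 10; 10; 10]; [:: 10; 6; 7; 8; 10; 10; 11; 11; 11; 11; 11; 11]]; [:: [:: 0; 0; 0; 0; 0; 0; 1; 2; 3; 3; 5; 3]; [:: 1; 1; 1; 0; 0; 1; 1; 1; 2; 0; 6; 7]; [:: 2; 2; 2; 2; 0; 1; 1; 2; 2; 3; 1; 8]; [:: 3; 2; 3; 3; 3; 0; 8; 8; 3; 3; 4; 8]; [:: 4; 0; 3; 4; 4; 4; 5; 3; 3; 4; 4; 10]; [:: 5; 5; 0; 4; 5; 5; 5; 1; 4; 4; 5; 6]; [:: 5; 6; 1; 5; 5; 6; 6; 6; 7; 11; 6; 6]; [:: 1; 7; 7; 2; 1; 1; 7; 7; 7; 8; 11; 7]; [:: 2; 7; 8; 8; 3; 7; 7; 8; 8; 8; 9; 8]; [:: 3; 8; 8; 9; 9; 4; 10; 8; 9; 9; 9; 9]; [:: 4; 5; 9; 9; 10; 10; 10; 6; 9; 10; 10; 10]; [:: 10; 6; 7; 8; 10; 10; 11; 11; 11; 11; 11; 11]]; [:: [:: 0; 0; 0; 0; 0; 0; 1; 2; 3; 4; 4; 4]; [:: 1; 1; 1; 0; 5; 1; 1; 1; 2; 5; 5; 7]; [:: 2; 2; 2; 2;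 0; 0; 7; 2; 2; 3; 0; 8]; [:: 3; 2; 3; 3; 3; 0; 2; 2; 3; 3; 4; 9]; [:: 4; 0; 3; 4; 4; 4; 5; 9; 9; 4; 4; 9]; [:: 5; 5; 0; 4; 5; 5; 5; 1; 4; 4; 5; 6]; [:: 5; 6; 1; 5; 5; 6; 6; 6; 7; 11; 6; 6]; [:: 1; 7; 7; 2; 6; 6; 7; 7; 7; 8; 6; 7]; [:: 2; 2; 8; 8; 3; 2; 11; 8; 8; 8; 9; 8]; [:: 3; 8; 8; 9; 9; 4; 10; 8; 9; 9; 9; 9]; [:: 4; 5; 9; 9; 10; 10; 10; 6; 9; 10; 10; 10]; [:: 10; 6; 7; 8; 10; 10; 11; 11; 11; 11; 11; 11]]; [:: [:: 0; 0; 0; 0; 0; 0; 5; 2; 3; 4; 5; 5]; [:: 1; 1; 1; 0; 5; 1; 1; 1; 2; 5; 5; 7]; [:: 2; 2; 2; 2; 0; 1; 1; 2; 2; 3; 1; 8]; [:: 3; 0; 3; 3; 3; 0; 0; 8; 3; 3; 4; 9]; [:: 4; 0; 3; 4; 4; 4; 5; 3; 3; 4; 4; 10]; [:: 5; 5; 0; 4; 5; 5; 5; 1; 10; 10; 5; 10]; [:: 5; 6; 1; 5; 5; 6; 6; 6; 7; 11; 6; 6]; [:: 1; 7; 7; 2; 6; 6; 7; 7; 7; 8; 6; 7]; [:: 2; 7; 8; 8; 3; 7; 7; 8; 8; 8; 9; 8]; [:: 3; 3; 3; 9; 9; 4; 10; 11; 9; 9; 9; 9]; [:: 4; 5; 9;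 9; 10; 10; 10; 6; 9; 10; 10; 10]; [:: 10; 6; 7; 8; 10; 10; 11; 11; 11; 11; 11; 11]]; [:: [:: 0; 0; 0; 0; 0; 0; 1; 1; 3; 4; 5; 1]; [:: 1; 1; 1; 0; 5; 1; 1; 1; 2; 6; 6; 6]; [:: 2; 2; 2; 2; 0; 1; 1; 2; 2; 3; 1; 8]; [:: 3; 2; 3; 3; 3; 0; 2; 2; 3; 3; 4; 9]; [:: 4; 0; 0; 4; 4; 4; 5; 0; 9; 4; 4; 10]; [:: 5; 5; 0; 4; 5; 5; 5; 1; 4; 4; 5; 6]; [:: 5; 6; 1; 10; 10; 6; 6; 6; 7; 10; 6; 6]; [:: 1; 7; 7; 2; 6; 6; 7; 7; 7; 8; 6; 7]; [:: 2; 7; 8; 8; 3; 7; 7; 8; 8; 8; 9; 8]; [:: 3; 8; 8; 9; 9; 4; 10; 8; 9; 9; 9; 9]; [:: 4; 5; 4; 4; 10; 10; 10; 6; 11; 10; 10; 10]; [:: 10; 6; 7; 8; 10; 10; 11; 11; 11; 11; 11; 11]]; [:: [:: 0; 0; 0; 0; 0; 0; 1; 2; 2; 4; 5; 2]; [:: 1; 1; 1; 0; 5; 1; 1; 1; 7; 7; 6; 7]; [:: 2; 2; 2; 2; 0; 1; 1; 2; 2; 3; 1; 8]; [:: 3; 2; 3; 3; 3; 0; 2; 2; 3; 3; 4; 9]; [:: 4; 0; 3; 4; 4; 4; 5; 3; 3; 4; 4; 10]; [:: 5; 5; 1; 4; 5; 5; 5; 1; 1; 10; 5; 6]; [:: 5;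 6; 1; 5; 5; 6; 6; 6; 7; 11; 6; 6]; [:: 1; 7; 7; 2; 11; 6; 7; 7; 7; 11; 11; 7]; [:: 2; 7; 8; 8; 3; 7; 7; 8; 8; 8; 9; 8]; [:: 3; 8; 8; 9; 9; 4; 10; 8; 9; 9; 9; 9]; [:: 5; 5; 5; 9; 10; 10; 10; 6; 11; 10; 10; 10]; [:: 10; 6; 7; 8; 10; 10; 11; 11; 11; 11; 11; 11]]; [:: [:: 0; 0; 0; 0; 0; 0; 1; 2; 2; 4; 5; 2]; [:: 1; 1; 1; 2; 5; 1; 1; 1; 2; 2; 6; 7]; [:: 2; 2; 2; 2; 0; 1; 7; 2; 2; 8; 8; 8]; [:: 3; 2; 3; 3; 3; 0; 2; 2; 3; 3; 4; 9]; [:: 4; 0; 3; 4; 4; 4; 5; 3; 3; 4; 4; 10]; [:: 5; 5; 0; 4; 5; 5; 5; 1; 4; 4; 5; 6]; [:: 1; 6; 1; 1; 10; 6; 6; 6; 7; 11; 6; 6]; [:: 1; 7; 7; 2; 6; 6; 7; 7; 7; 8; 6; 7]; [:: 2; 7; 8; 8; 3; 11; 11; 8; 8; 8; 11; 8]; [:: 3; 8; 8; 9; 9; 4; 10; 8; 9; 9; 9; 9]; [:: 4; 5; 9; 9; 10; 10; 10; 6; 9; 10; 10; 10]; [:: 6; 6; 7; 8; 9; 6; 11; 11; 11; 11; 11; 11]]; [:: [:: 0; 0; 0; 0; 0; 0; 1; 2; 2; 4; 5; 2]; [:: 1; 1; 1; 0; 5; 1; 1; 1; 2; 5; 5; 7];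 [:: 2; 2; 2; 2; 3; 1; 7; 2; 2; 3; 3; 8]; [:: 3; 2; 3; 3; 3; 0; 9; 8; 3; 3; 9; 9]; [:: 4; 0; 3; 4; 4; 4; 5; 3; 3; 4; 4; 10]; [:: 5; 5; 0; 4; 5; 5; 5; 1; 4; 4; 5; 6]; [:: 5; 6; 1; 5; 5; 6; 6; 6; 7; 11; 6; 6]; [:: 2; 7; 7; 2; 2; 6; 7; 7; 7; 8; 11; 7]; [:: 2; 7; 8; 8; 3; 7; 7; 8; 8; 8; 9; 8]; [:: 3; 11; 8; 9; 9; 4; 11; 11; 9; 9; 9; 9]; [:: 4; 5; 9; 9; 10; 10; 10; 6; 9; 10; 10; 10]; [:: 7; 7; 7; 8; 9; 10; 11; 11; 11; 11; 11; 11]]; [:: [:: 0; 0; 0; 0; 0; 0; 1; 2; 2; 4; 5; 2]; [:: 1; 1; 1; 0; 5; 1; 1; 1; 2; 5; 5; 7]; [:: 2; 2; 2; 2; 0; 1; 1; 2; 2; 3; 1; 8]; [:: 3; 2; 3; 3; 3; 4; 4; 8; 3; 3; 4; 9]; [:: 4; 0; 3; 4; 4; 4; 10; 10; 9; 4; 4; 10]; [:: 5; 5; 0; 4; 5; 5; 5; 1; 4; 4; 5; 6]; [:: 5; 6; 1; 5; 5; 6; 6; 6; 7; 11; 6; 6]; [:: 1; 7; 7; 2; 6; 6; 7; 7; 7; 8; 6; 7]; [:: 3; 7; 8; 8; 3; 3; 11; 8; 8; 8; 9; 8]; [:: 3; 8; 8; 9; 9; 4; 10; 8; 9; 9; 9;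 9]; [:: 4; 5; 11; 9; 10; 10; 10; 11; 11; 10; 10; 10]; [:: 8; 6; 8; 8; 9; 10; 11; 11; 11; 11; 11; 11]]; [:: [:: 0; 0; 0; 0; 0; 0; 1; 2; 2; 4; 5; 2]; [:: 1; 1; 1; 0; 5; 1; 1; 1; 2; 5; 5; 7]; [:: 2; 2; 2; 2; 0; 1; 1; 2; 2; 3; 1; 8]; [:: 3; 2; 3; 3; 3; 0; 2; 2; 3; 3; 4; 9]; [:: 4; 5; 3; 4; 4; 4; 5; 5; 9; 4; 4; 10]; [:: 5; 5; 0; 4; 5; 5; 5; 6; 6; 10; 5; 6]; [:: 5; 6; 1; 11; 10; 6; 6; 6; 11; 11; 6; 6]; [:: 1; 7; 7; 2; 6; 6; 7; 7; 7; 8; 6; 7]; [:: 2; 7; 8; 8; 3; 7; 7; 8; 8; 8; 9; 8]; [:: 4; 4; 8; 9; 9; 4; 10; 11; 9; 9; 9; 9]; [:: 4; 5; 9; 9; 10; 10; 10; 6; 9; 10; 10; 10]; [:: 9; 6; 7; 9; 9; 10; 11; 11; 11; 11; 11; 11]]; [:: [:: 0; 0; 0; 0; 0; 0; 1; 2; 2; 4; 5; 2]; [:: 1; 1; 1; 0; 5; 1; 1; 1; 2; 5; 5; 7]; [:: 2; 2; 2; 2; 0; 1; 1; 2; 2; 3; 1; 8]; [:: 3; 2; 3; 3; 3; 0; 2; 2; 3; 3; 4; 9]; [:: 4; 0; 3; 4; 4; 4; 5; 3; 3; 4; 4; 10]; [:: 5; 5; 0; 4; 5; 5; 5; 1; 4;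 4; 5; 6]; [:: 5; 6; 7; 7; 10; 6; 6; 6; 7; 11; 6; 6]; [:: 1; 7; 7; 8; 8; 6; 7; 7; 7; 8; 11; 7]; [:: 2; 7; 8; 8; 9; 9; 11; 8; 8; 8; 9; 8]; [:: 3; 10; 8; 9; 9; 10; 10; 11; 9; 9; 9; 9]; [:: 4; 6; 6; 9; 10; 10; 10; 6; 11; 10; 10; 10]; [:: 10; 6; 7; 8; 10; 10; 11; 11; 11; 11; 11; 11]]].
Definition RTtab : seq (seq (seq nat)) := [:: [:: [:: 0; 4; 5; 1; 2; 3; 0; 0; 0; 0; 0; 0]; [:: 4; 0; 3; 0; 0; 5; 1; 2; 0; 0; 0; 0]; [:: 4; 5; 0; 3; 0; 0; 0; 1; 2; 0; 0; 0]; [:: 4; 0; 5; 0; 3; 0; 0; 0; 1; 2; 0; 0]; [:: 4; 0; 0; 5; 0; 3; 0; 0; 0; 1; 2; 0]; [:: 4; 3; 0; 0; 5; 0; 2; 0; 0; 0; 1; 0]; [:: 0; 4; 0; 0; 0; 5; 0; 3; 0; 0; 1; 2]; [:: 0; 4; 3; 0; 0; 0; 5; 0; 2; 0; 0; 1]; [:: 0; 0; 4; 3; 0; 0; 0; 5; 0; 2; 0; 1]; [:: 0; 0; 0; 4; 3; 0; 0; 0; 5; 0; 2; 1]; [:: 0; 0; 0; 0; 4; 3; 2; 0; 0; 5; 0; 1]; [:: 0; 0; 0; 0; 0; 0; 4; 3; 2; 1; 5; 0]]; [:: [:: 0; 4; 5; 1; 2; 3; 0; 0; 0; 0; 0; 0];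 [:: 4; 0; 3; 0; 0; 5; 1; 2; 0; 0; 0; 0]; [:: 3; 4; 0; 2; 0; 0; 0; 5; 1; 0; 0; 0]; [:: 4; 0; 5; 0; 3; 0; 0; 0; 1; 2; 0; 0]; [:: 4; 0; 0; 5; 0; 3; 0; 0; 0; 1; 2; 0]; [:: 5; 4; 0; 0; 1; 0; 3; 0; 0; 0; 2; 0]; [:: 0; 4; 0; 0; 0; 5; 0; 3; 0; 0; 1; 2]; [:: 0; 4; 3; 0; 0; 0; 5; 0; 2; 0; 0; 1]; [:: 0; 0; 4; 3; 0; 0; 0; 5; 0; 2; 0; 1]; [:: 0; 0; 0; 4; 3; 0; 0; 0; 5; 0; 2; 1]; [:: 0; 0; 0; 0; 4; 3; 2; 0; 0; 5; 0; 1]; [:: 0; 0; 0; 0; 0; 0; 4; 3; 2; 1; 5; 0]]; [:: [:: 0; 3; 4; 5; 1; 2; 0; 0; 0; 0; 0; 0]; [:: 5; 0; 4; 0; 0; 1; 2; 3; 0; 0; 0; 0]; [:: 4; 5; 0; 3; 0; 0; 0; 1; 2; 0; 0; 0]; [:: 3; 0; 4; 0; 2; 0; 0; 0; 5; 1; 0; 0]; [:: 4; 0; 0; 5; 0; 3; 0; 0; 0; 1; 2; 0]; [:: 4; 3; 0; 0; 5; 0; 2; 0; 0; 0; 1; 0]; [:: 0; 4; 0; 0; 0; 5; 0; 3; 0; 0; 1; 2]; [:: 0; 5; 4; 0; 0; 0; 1; 0; 3; 0; 0; 2]; [:: 0; 0; 4; 3; 0; 0; 0; 5; 0; 2; 0;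 1]; [:: 0; 0; 0; 4; 3; 0; 0; 0; 5; 0; 2; 1]; [:: 0; 0; 0; 0; 4; 3; 2; 0; 0; 5; 0; 1]; [:: 0; 0; 0; 0; 0; 0; 4; 3; 2; 1; 5; 0]]; [:: [:: 0; 2; 3; 4; 5; 1; 0; 0; 0; 0; 0; 0]; [:: 4; 0; 3; 0; 0; 5; 1; 2; 0; 0; 0; 0]; [:: 5; 1; 0; 4; 0; 0; 0; 2; 3; 0; 0; 0]; [:: 4; 0; 5; 0; 3; 0; 0; 0; 1; 2; 0; 0]; [:: 3; 0; 0; 4; 0; 2; 0; 0; 0; 5; 1; 0]; [:: 4; 3; 0; 0; 5; 0; 2; 0; 0; 0; 1; 0]; [:: 0; 4; 0; 0; 0; 5; 0; 3; 0; 0; 1; 2]; [:: 0; 4; 3; 0; 0; 0; 5; 0; 2; 0; 0; 1]; [:: 0; 0; 5; 4; 0; 0; 0; 1; 0; 3; 0; 2]; [:: 0; 0; 0; 4; 3; 0; 0; 0; 5; 0; 2; 1]; [:: 0; 0; 0; 0; 4; 3; 2; 0; 0; 5; 0; 1]; [:: 0; 0; 0; 0; 0; 0; 4; 3; 2; 1; 5; 0]]; [:: [:: 0; 1; 2; 3; 4; 5; 0; 0; 0; 0; 0; 0]; [:: 4; 0; 3; 0; 0; 5; 1; 2; 0; 0; 0; 0]; [:: 4; 5; 0; 3; 0; 0; 0; 1; 2; 0; 0; 0]; [:: 5; 0; 1; 0; 4; 0; 0; 0; 2; 3; 0; 0]; [:: 4; 0; 0; 5; 0; 3; 0; 0; 0;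 1; 2; 0]; [:: 3; 2; 0; 0; 4; 0; 1; 0; 0; 0; 5; 0]; [:: 0; 4; 0; 0; 0; 5; 0; 3; 0; 0; 1; 2]; [:: 0; 4; 3; 0; 0; 0; 5; 0; 2; 0; 0; 1]; [:: 0; 0; 4; 3; 0; 0; 0; 5; 0; 2; 0; 1]; [:: 0; 0; 0; 5; 4; 0; 0; 0; 1; 0; 3; 2]; [:: 0; 0; 0; 0; 4; 3; 2; 0; 0; 5; 0; 1]; [:: 0; 0; 0; 0; 0; 0; 4; 3; 2; 1; 5; 0]]; [:: [:: 0; 5; 1; 2; 3; 4; 0; 0; 0; 0; 0; 0]; [:: 3; 0; 2; 0; 0; 4; 5; 1; 0; 0; 0; 0]; [:: 4; 5; 0; 3; 0; 0; 0; 1; 2; 0; 0; 0]; [:: 4; 0; 5; 0; 3; 0; 0; 0; 1; 2; 0; 0]; [:: 5; 0; 0; 1; 0; 4; 0; 0; 0; 2; 3; 0]; [:: 4; 3; 0; 0; 5; 0; 2; 0; 0; 0; 1; 0]; [:: 0; 3; 0; 0; 0; 4; 0; 2; 0; 0; 5; 1]; [:: 0; 4; 3; 0; 0; 0; 5; 0; 2; 0; 0; 1]; [:: 0; 0; 4; 3; 0; 0; 0; 5; 0; 2; 0; 1]; [:: 0; 0; 0; 4; 3; 0; 0; 0; 5; 0; 2; 1]; [:: 0; 0; 0; 0; 5; 4; 3; 0; 0; 1; 0; 2]; [:: 0; 0; 0; 0; 0; 0; 4; 3; 2; 1; 5; 0]]; [:: [:: 0; 4; 5; 1; 2; 3; 0;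 0; 0; 0; 0; 0]; [:: 2; 0; 1; 0; 0; 3; 4; 5; 0; 0; 0; 0]; [:: 4; 5; 0; 3; 0; 0; 0; 1; 2; 0; 0; 0]; [:: 4; 0; 5; 0; 3; 0; 0; 0; 1; 2; 0; 0]; [:: 4; 0; 0; 5; 0; 3; 0; 0; 0; 1; 2; 0]; [:: 1; 5; 0; 0; 2; 0; 4; 0; 0; 0; 3; 0]; [:: 0; 4; 0; 0; 0; 5; 0; 3; 0; 0; 1; 2]; [:: 0; 3; 2; 0; 0; 0; 4; 0; 1; 0; 0; 5]; [:: 0; 0; 4; 3; 0; 0; 0; 5; 0; 2; 0; 1]; [:: 0; 0; 0; 4; 3; 0; 0; 0; 5; 0; 2; 1]; [:: 0; 0; 0; 0; 1; 5; 4; 0; 0; 2; 0; 3]; [:: 0; 0; 0; 0; 0; 0; 4; 3; 2; 1; 5; 0]]; [:: [:: 0; 4; 5; 1; 2; 3; 0; 0; 0; 0; 0; 0]; [:: 1; 0; 5; 0; 0; 2; 3; 4; 0; 0; 0; 0]; [:: 2; 3; 0; 1; 0; 0; 0; 4; 5; 0; 0; 0]; [:: 4; 0; 5; 0; 3; 0; 0; 0; 1; 2; 0; 0]; [:: 4; 0; 0; 5; 0; 3; 0; 0; 0; 1; 2; 0]; [:: 4; 3; 0; 0; 5; 0; 2; 0; 0; 0; 1; 0]; [:: 0; 5; 0; 0; 0; 1; 0; 4; 0; 0; 2; 3]; [:: 0; 4; 3; 0; 0; 0; 5; 0; 2; 0; 0; 1]; [:: 0; 0; 3; 2; 0; 0;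 0; 4; 0; 1; 0; 5]; [:: 0; 0; 0; 4; 3; 0; 0; 0; 5; 0; 2; 1]; [:: 0; 0; 0; 0; 4; 3; 2; 0; 0; 5; 0; 1]; [:: 0; 0; 0; 0; 0; 0; 5; 4; 3; 2; 1; 0]]; [:: [:: 0; 4; 5; 1; 2; 3; 0; 0; 0; 0; 0; 0]; [:: 4; 0; 3; 0; 0; 5; 1; 2; 0; 0; 0; 0]; [:: 1; 2; 0; 5; 0; 0; 0; 3; 4; 0; 0; 0]; [:: 2; 0; 3; 0; 1; 0; 0; 0; 4; 5; 0; 0]; [:: 4; 0; 0; 5; 0; 3; 0; 0; 0; 1; 2; 0]; [:: 4; 3; 0; 0; 5; 0; 2; 0; 0; 0; 1; 0]; [:: 0; 4; 0; 0; 0; 5; 0; 3; 0; 0; 1; 2]; [:: 0; 1; 5; 0; 0; 0; 2; 0; 4; 0; 0; 3]; [:: 0; 0; 4; 3; 0; 0; 0; 5; 0; 2; 0; 1]; [:: 0; 0; 0; 3; 2; 0; 0; 0; 4; 0; 1; 5]; [:: 0; 0; 0; 0; 4; 3; 2; 0; 0; 5; 0; 1]; [:: 0; 0; 0; 0; 0; 0; 1; 5; 4; 3; 2; 0]]; [:: [:: 0; 4; 5; 1; 2; 3; 0; 0; 0; 0; 0; 0]; [:: 4; 0; 3; 0; 0; 5; 1; 2; 0; 0; 0; 0]; [:: 4; 5; 0; 3; 0; 0; 0; 1; 2; 0; 0; 0]; [:: 1; 0; 2; 0; 5; 0; 0; 0; 3; 4; 0; 0]; [:: 2; 0; 0; 3;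 0; 1; 0; 0; 0; 4; 5; 0]; [:: 4; 3; 0; 0; 5; 0; 2; 0; 0; 0; 1; 0]; [:: 0; 4; 0; 0; 0; 5; 0; 3; 0; 0; 1; 2]; [:: 0; 4; 3; 0; 0; 0; 5; 0; 2; 0; 0; 1]; [:: 0; 0; 1; 5; 0; 0; 0; 2; 0; 4; 0; 3]; [:: 0; 0; 0; 4; 3; 0; 0; 0; 5; 0; 2; 1]; [:: 0; 0; 0; 0; 3; 2; 1; 0; 0; 4; 0; 5]; [:: 0; 0; 0; 0; 0; 0; 2; 1; 5; 4; 3; 0]]; [:: [:: 0; 4; 5; 1; 2; 3; 0; 0; 0; 0; 0; 0]; [:: 4; 0; 3; 0; 0; 5; 1; 2; 0; 0; 0; 0]; [:: 4; 5; 0; 3; 0; 0; 0; 1; 2; 0; 0; 0]; [:: 4; 0; 5; 0; 3; 0; 0; 0; 1; 2; 0; 0]; [:: 1; 0; 0; 2; 0; 5; 0; 0; 0; 3; 4; 0]; [:: 2; 1; 0; 0; 3; 0; 5; 0; 0; 0; 4; 0]; [:: 0; 2; 0; 0; 0; 3; 0; 1; 0; 0; 4; 5]; [:: 0; 4; 3; 0; 0; 0; 5; 0; 2; 0; 0; 1]; [:: 0; 0; 4; 3; 0; 0; 0; 5; 0; 2; 0; 1]; [:: 0; 0; 0; 1; 5; 0; 0; 0; 2; 0; 4; 3]; [:: 0; 0; 0; 0; 4; 3; 2; 0; 0; 5; 0; 1]; [:: 0; 0; 0; 0; 0; 0; 3; 2; 1; 5; 4; 0]]; [:: [:: 0; 4;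 5; 1; 2; 3; 0; 0; 0; 0; 0; 0]; [:: 4; 0; 3; 0; 0; 5; 1; 2; 0; 0; 0; 0]; [:: 4; 5; 0; 3; 0; 0; 0; 1; 2; 0; 0; 0]; [:: 4; 0; 5; 0; 3; 0; 0; 0; 1; 2; 0; 0]; [:: 4; 0; 0; 5; 0; 3; 0; 0; 0; 1; 2; 0]; [:: 4; 3; 0; 0; 5; 0; 2; 0; 0; 0; 1; 0]; [:: 0; 1; 0; 0; 0; 2; 0; 5; 0; 0; 3; 4]; [:: 0; 2; 1; 0; 0; 0; 3; 0; 5; 0; 0; 4]; [:: 0; 0; 2; 1; 0; 0; 0; 3; 0; 5; 0; 4]; [:: 0; 0; 0; 2; 1; 0; 0; 0; 3; 0; 5; 4]; [:: 0; 0; 0; 0; 2; 1; 5; 0; 0; 3; 0; 4]; [:: 0; 0; 0; 0; 0; 0; 4; 3; 2; 1; 5; 0]]].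
Definition Dn (i j : nat) : nat := nth 0 (nth [::] Dtab i) j.
Definition Sn (p m t : nat) : nat := nth 0 (nth [::] (nth [::] STtab p) m) t.
Definition Rn (p m w : nat) : nat := nth 0 (nth [::] (nth [::] RTtab p) m) w.
Definition I12 := iota 0 12.
Definition all2n (P : nat -> nat -> bool) := all (fun i => all (P i) I12) I12.
Definition all3n (P : nat -> nat -> nat -> bool) := all (fun i => all2n (P i)) I12.
Definition all4n (P : nat -> nat -> nat -> nat -> bool) := all (fun i => all3n (P i)) I12.

Notation V := 'I_12.
Local Notation d := (gdist ico_edge).

Lemma all2nP (P : nat -> nat -> bool) : all2n P -> forall x y : V, P x y.
Proof.
move=> H x y; have Hx : (x : nat) \in I12 by rewrite mem_iota ltn_ord.
have Hy : (y : nat) \in I12 by rewrite mem_iota ltn_ord.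
exact: (allP (allP H _ Hx) _ Hy).
Qed.
Lemma all3nP (P : nat -> nat -> nat -> bool) : all3n P -> forall x y z : V, P x y z.
Proof.
move=> H x; have Hx : (x : nat) \in I12 by rewrite mem_iota ltn_ord.
exact: all2nP (allP H _ Hx).
Qed.
Lemma all4nP (P : nat -> nat -> nat -> nat -> bool) : all4n P -> forall x y z w : V, P x y z w.
Proof.
move=> H x; have Hx : (x : nat) \in I12 by rewrite mem_iota ltn_ord.
exact: all3nP (allP H _ Hx).
Qed.

Lemma existsI12 (P : nat -> bool) : [exists z : V, P z] = has P I12.
Proof.
apply/existsP/hasP => [[z Hz]|[z Hz1 Hz2]].
  by exists (z : nat) => //; rewrite mem_iota ltn_ord.
have Hz : z < 12 by move: Hz1; rewrite mem_iota.
by exists (Ordinal Hz).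
Qed.

Lemma chk_ball0 : all2n (fun x y => (y == x) == (Dn x y <= 0)).
Proof. by vm_compute. Qed.
Lemma chk_ballS : all2n (fun x y => all (fun k =>
   ((Dn x y <= k) || has (fun z => (Dn x z <= k) && (ico_adj_nat z y || ico_adj_nat y z)) I12)
   == (Dn x y <= k.+1)) (iota 0 3)).
Proof. by vm_compute. Qed.
Lemma chk_le3 : all2n (fun x y => Dn x y <= 3).
Proof. by vm_compute. Qed.

Lemma ball_mem k (x y : V) : (y \in ball ico_edge k x) = (Dn x y <= k).
Proof.
elim: k y => [|k IH] y /=.
  have /= /eqP H := all2nP chk_ball0 x y.
  by rewrite in_set1 -val_eqE /= H.
rewrite in_setU IH in_set.
have -> : [exists z, (z \in ball ico_edge k x) && ico_edge z y]
   = [exists z : V, (Dn x z <= k) && (ico_adj_nat z y || ico_adj_nat y z)].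
  by apply: eq_existsb => z; rewrite IH.
rewrite (existsI12 (fun z => (Dn x z <= k) && (ico_adj_nat z y || ico_adj_nat y z))).
case: (ltnP k 3) => Hk.
  have := allP (all2nP chk_ballS x y) k; rewrite mem_iota /= add0n => /(_ Hk) /eqP ->.
  done.
have H3 := all2nP chk_le3 x y.
by rewrite (leq_trans H3 Hk) (leq_trans H3 (leqW Hk)).
Qed.

Lemma distE (x y : V) : d x y = Dn x y.
Proof.
rewrite /gdist card_ord.
rewrite (eq_find (a2 := fun k => Dn x y <= k)); last by move=> k; rewrite ball_mem.
have := all2nP chk_le3 x y.
by case: (Dn x y) => [|[|[|[|n]]]].
Qed.

Definition sig (p m t : V) : V := inord (Sn p m t).
Definition rk (p m w : V) : nat := Rn p m w.
Lemma chk_S12 : all3n (fun p m t => Sn p m t < 12). Proof. by vm_compute. Qed.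
Lemma sigE p m t : (sig p m t : nat) = Sn p m t.
Proof. by rewrite inordK // (all3nP chk_S12). Qed.
Lemma sig_eqE p m t (y : V) : (sig p m t == y) = (Sn p m t == y).
Proof. by rewrite -val_eqE /= sigE. Qed.

Lemma chk_d0 : all2n (fun x y => (Dn x y == 0) == (x == y)). Proof. by vm_compute. Qed.
Lemma F_d0 (x y : V) : (d x y == 0) = (x == y).
Proof. by have /= /eqP := all2nP chk_d0 x y; rewrite distE -val_eqE. Qed.
Lemma F_dpos (x y : V) : x != y -> 0 < d x y.
Proof. by rewrite lt0n F_d0. Qed.

Lemma chk_tri : all3n (fun x y z => Dn x z <= Dn x y + Dn y z). Proof. by vm_compute. Qed.
Lemma F_tri (x y z : V) : d x z <= d x y + d y z.
Proof. by rewrite !distE; apply: (all3nP chk_tri). Qed.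

Lemma chk_sig1 : all3n (fun p x y => (x != y) ==> (Dn x y != 1) ==> (Dn x (Sn p x y) == 1)).
Proof. by vm_compute. Qed.
Lemma F_sig1 p (x y : V) : x != y -> d x y != 1 -> d x (sig p x y) = 1.
Proof.
move=> H1 H2; have /= := all3nP chk_sig1 p x y.
by rewrite -val_eqE in H1; rewrite H1 -distE H2 /= !distE sigE => /eqP.
Qed.

Lemma chk_sig2 : all3n (fun p x y => (x != y) ==> (Dn x y != 1) ==>
  (Dn x y == Dn x (Sn p x y) + Dn (Sn p x y) y)).
Proof. by vm_compute. Qed.
Lemma F_sig2 p (x y : V) : x != y -> d x y != 1 ->
  d x y = d x (sig p x y) + d (sig p x y) y.
Proof.
move=> H1 H2; have /= := all3nP chk_sig2 p x y.
by rewrite -val_eqE in H1; rewrite H1 -distE H2 /= !distE sigE => /eqP.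
Qed.

Lemma chk_coh : all4n (fun p x y z => (Dn x y == 1) ==> (2 <= Dn y z) ==>
   (((Dn x z == Dn x y + Dn y z) && (Sn p x z == y)) ==
    ((Dn x (Sn x y z) == Dn x y + Dn y (Sn x y z)) && (Sn p x (Sn x y z) == y)))).
Proof. by vm_compute. Qed.
Lemma F_coh p (x y z : V) : d x y = 1 -> 2 <= d y z ->
  ((d x z == d x y + d y z) && (sig p x z == y)) =
  ((d x (sig x y z) == d x y + d y (sig x y z)) && (sig p x (sig x y z) == y)).
Proof.
move=> H1 H2; have /= := all4nP chk_coh p x y z.
rewrite !sig_eqE !distE !sigE in H1 H2 *; rewrite H1 H2 /=.
by move=> /eqP.
Qed.

Lemma chk_rank : all4n (fun p x y t => (Dn x y == 1) ==> (Dn y t == 1) ==> (Dn x t == 2) ==>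
   (Sn p x t != y) ==> (Rn p x y < Rn p x (Sn p x t))).
Proof. by vm_compute. Qed.
Lemma F_rank p (x y t : V) : d x y = 1 -> d y t = 1 -> d x t = 2 -> sig p x t != y ->
  rk p x y < rk p x (sig p x t).
Proof.
move=> H1 H2 H3 H4; have /= := all4nP chk_rank p x y t.
rewrite !distE in H1 H2 H3; rewrite sig_eqE in H4.
by rewrite H1 H2 H3 H4 /rk sigE.
Qed.

Lemma chk_rkB : all3n (fun p x y => Rn p x y < 7). Proof. by vm_compute. Qed.
Lemma F_rkB p (x y : V) : rk p x y < 7.
Proof. exact: (all3nP chk_rkB). Qed.

Local Notation gl := (glen ico_edge).

Definition vf (i : nat) (s : seq V) :=
  (0 < i < (size s).-1) && (gl (face i s) == gl s).

Lemma face_cons i (x : V) t : face i.+1 (x :: t) = x :: face i t.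
Proof. by []. Qed.

Lemma size_face i (s : seq V) : i < size s -> size (face i s) = (size s).-1.
Proof.
move=> H; rewrite /face size_cat size_take size_drop H.
by case: (size s) H => // n Hn /=; lia.
Qed.

Lemma vf1 (x y z : V) r : vf 1 (x :: y :: z :: r) = (d x z == d x y + d y z).
Proof. by rewrite /vf /= addnA eqn_add2r. Qed.

Lemma vf_cons i (x y : V) t : 0 < i -> vf i.+1 (x :: y :: t) = vf i (y :: t).
Proof.
case: i => // i _; rewrite /vf /=.
by rewrite eqn_add2l.
Qed.

Definition ev (p x y : V) (r : seq V) : bool :=
  if r is z :: _ then (d x z == d x y + d y z) && (sig p x z == y) else false.

Definition consM (x : V) (o : option (bool * seq V)) :=
  if o is Some (b, t) then Some (b, x :: t) else None.

Fixpoint Mch (p : V) (s : seq V) : option (bool * seq V) :=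
  match s with
  | x :: s1 =>
    match s1 with
    | y :: r =>
      if d x y != 1 then Some (true, x :: sig p x y :: s1)
      else if ev p x y r then Some (false, x :: r)
      else consM x (Mch x s1)
    | [::] => None
    end
  | [::] => None
  end.

Definition B := 8.

Fixpoint Psi (p : V) (s : seq V) : nat :=
  match s with
  | x :: s1 =>
    match s1 with
    | y :: r =>
      if d x y != 1 then (rk p x (sig p x y)).+1 * B ^ size r
      else (rk p x y).+1 * B ^ size r + Psi x s1
    | [::] => 0
    end
  | [::] => 0
  end.

Lemma Mch_cons p (x y : V) r : Mch p (x :: y :: r) =
  if d x y != 1 then Some (true, x :: sig p x y :: y :: r)
  else if ev p x y r then Some (false, x :: r)
  else consM x (Mch x (y :: r)).
Proof. by []. Qed.

Lemma Psi_cons p (x y : V) r : Psi p (x :: y :: r) =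
  if d x y != 1 then (rk p x (sig p x y)).+1 * B ^ size r
  else (rk p x y).+1 * B ^ size r + Psi x (y :: r).
Proof. by []. Qed.

Lemma Mch_head p (x : V) s b t : Mch p (x :: s) = Some (b, t) -> exists t1, t = x :: t1.
Proof.
case: s => [|y r] //; rewrite Mch_cons.
case: ifP => _ ; first by (move=> [_ <-]; exists (sig p x y :: y :: r)).
case: ifP => _ ; first by (move=> [_ <-]; exists r).
by case: (Mch x (y :: r)) => [[b1 t1]|] //= [_ <-]; exists t1.
Qed.

Lemma Mch_size p s b t : Mch p s = Some (b, t) -> size t = if b then (size s).+1 else (size s).-1.
Proof.
elim: s p b t => [|x [|y r] IH] p b t //.
rewrite Mch_cons; case: ifP => _; first by case=> <- <-.
case: ifP => _; first by case=> <- <-.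
case E: (Mch x (y :: r)) => [[b1 t1]|] //= [Hb <-] /=.
rewrite (IH _ _ _ E) -Hb; by case: b1 {E Hb}.
Qed.

Lemma adj_cons2 (x y : V) r : adj_distinct (x :: y :: r) = (x != y) && adj_distinct (y :: r).
Proof. by []. Qed.

Lemma Psi_pos p s : 1 < size s -> 0 < Psi p s.
Proof.
case: s => [|x [|y r]] // _; rewrite Psi_cons.
by case: ifP => _; rewrite ?addn_gt0 muln_gt0 expn_gt0.
Qed.

Lemma Psi_bound p s : Psi p s < B ^ (size s).-1.
Proof.
elim: s p => [|x [|y r] IH] p //.
rewrite Psi_cons; change ((size [:: x, y & r]).-1) with (size r).+1; rewrite expnS.
have HB : 0 < B ^ size r by rewrite expn_gt0.
case: ifP => _.
  by rewrite ltn_pmul2r //; apply: (leq_ltn_trans (F_rkB p x _)).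
have H : Psi x (y :: r) < B ^ size r := IH x.
apply: (@leq_trans ((rk p x y).+2 * B ^ size r)).
  by rewrite [X in _ < X]mulSn; lia.
by rewrite leq_pmul2r //; exact: (F_rkB p x y).
Qed.

Lemma glen_cons2 (x y : V) r : gl (x :: y :: r) = d x y + gl (y :: r).
Proof. by []. Qed.

Lemma F_neq (x y : V) : 0 < d x y -> x != y.
Proof. by rewrite lt0n F_d0. Qed.

Lemma tlE (A : Type) (x y : A) (l1 l2 : seq A) (b1 b2 : bool) :
  Some (b1, x :: l1) = Some (b2, y :: l2) -> l1 = l2.
Proof. by case. Qed.
Lemma hdE (A : Type) (l1 l2 : seq A) (b1 b2 : bool) :
  Some (b1, l1) = Some (b2, l2) -> b1 = b2 /\ l1 = l2.
Proof. by case=> -> ->. Qed.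

Lemma d1E (x y : V) : (d x y != 1) = false -> d x y = 1.
Proof. by move/negbFE/eqP. Qed.

Lemma Mch_glen p s b t : adj_distinct s -> Mch p s = Some (b,t) -> gl t = gl s.
Proof.
elim: s p b t => [|x [|y r] IH] p b t //.
rewrite adj_cons2 Mch_cons => /andP [Hxy Had].
case: ifP => H1.
  by move=> /hdE [_ <-]; rewrite !glen_cons2 addnA -(F_sig2 p Hxy H1).
case: ifP => Hev.
  move=> /hdE [_ <-]; case: r Hev {Had IH} => [|z r'] //= /andP [/eqP Hz _].
  by rewrite Hz addnA.
case E: (Mch x (y :: r)) => [[b1 t1]|] // /hdE [_ <-].
have [t2 Et2] := Mch_head E.
by rewrite Et2 !glen_cons2 -(IH _ _ _ Had E) Et2.
Qed.

Lemma Mch_adj p s b t : adj_distinct s -> Mch p s = Some (b,t) -> adj_distinct t.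
Proof.
elim: s p b t => [|x [|y r] IH] p b t //.
rewrite adj_cons2 Mch_cons => /andP [Hxy Had].
case: ifP => H1.
  move=> /hdE [_ <-]; rewrite !adj_cons2 Had andbT.
  have Hs := F_sig2 p Hxy H1.
  have Hs1 := F_sig1 p Hxy H1.
  rewrite F_neq ?Hs1 //= F_neq //.
  have : 0 < d x y by rewrite lt0n F_d0.
  move: H1; rewrite Hs Hs1; case: (d (sig p x y) y) => //.
case: ifP => Hev.
  move=> /hdE [_ <-]; case: r Hev Had {IH} => [|z r'] //= /andP [/eqP Hz _] /andP [Hyz Had].
  rewrite Had andbT F_neq // Hz (d1E H1).
  by [].
case E: (Mch x (y :: r)) => [[b1 t1]|] // /hdE [_ <-].
have [t2 Et2] := Mch_head E; rewrite Et2 adj_cons2 Hxy andTb -Et2.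
exact: IH Had E.
Qed.

Lemma Mch_coh p (x y : V) r b r2 : d x y = 1 -> adj_distinct (y :: r) ->
  Mch x (y :: r) = Some (b, y :: r2) -> ev p x y r = ev p x y r2.
Proof.
move=> Dxy; case: r => [|z r'] Had; first by [].
rewrite Mch_cons.
move: Had; rewrite adj_cons2 => /andP [Hyz Had].
case H1: (d y z != 1).
  move=> /= Heq; move: (tlE Heq) => {Heq} <- /=; apply: F_coh => //.
  have : 0 < d y z by rewrite lt0n F_d0.
  by move: H1; case: (d y z) => [|[|n]].
case Hev: (ev x y z r').
  move=> /= Heq; move: (tlE Heq) => {Heq} <-; case: r' Hev Had => [|z2 r''] // /andP [/eqP Hz /eqP Hsig].
  rewrite adj_cons2 => /andP [Hzz _].
  have Dyz := d1E H1.
  have H2 : 2 <= d y z2 by rewrite Hz Dyz ltnS lt0n F_d0.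
  by have := F_coh p Dxy H2; rewrite Hsig.
case E: (Mch y (z :: r')) => [[b1 t1]|] //= Heq; move: (tlE Heq) => {Heq} <-.
by have [t2 ->] := Mch_head E.
Qed.

Lemma Mch_inv p s b t : adj_distinct s -> Mch p s = Some (b,t) -> Mch p t = Some (~~ b, s).
Proof.
elim: s p b t => [|x [|y r] IH] p b t //.
rewrite adj_cons2 Mch_cons => /andP [Hxy Had].
case: ifP => H1.
  move=> /hdE [<- <-]; rewrite Mch_cons (F_sig1 p Hxy H1) eqxx.
  have -> : ev p x (sig p x y) (y :: r) by rewrite /ev -(F_sig2 p Hxy H1) !eqxx.
  by [].
case: ifP => Hev.
  move=> /hdE [<- <-]; case: r Hev Had {IH} => [|z r'] // /andP [/eqP Hz /eqP Hsig].
  rewrite adj_cons2 => /andP [Hyz _].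
  have Hp : d y z != 0 by rewrite F_d0.
  by rewrite Mch_cons Hz (d1E H1) add1n eqSS Hp /= Hsig.
case E: (Mch x (y :: r)) => [[b1 t1]|] // /hdE [<- <-].
have [r2 Et2] := Mch_head E.
have IH1 := IH _ _ _ Had E.
have E' : Mch x (y :: r) = Some (b1, y :: r2) by rewrite E Et2.
rewrite Et2 Mch_cons H1 -(Mch_coh p (d1E H1) Had E') Hev -Et2 IH1.
by [].
Qed.

Lemma Mch_none p s : adj_distinct s -> Mch p s = None -> gl s = (size s).-1.
Proof.
elim: s p => [|x [|y r] IH] p //.
rewrite adj_cons2 Mch_cons => /andP [Hxy Had].
case: ifP => H1 //; case: ifP => Hev //.
case E: (Mch x (y :: r)) => [[b1 t1]|] // _.
by rewrite glen_cons2 (IH _ Had E) (d1E H1).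
Qed.

Lemma Mch_face p s t : adj_distinct s -> Mch p s = Some (true, t) ->
  exists2 i, vf i t & face i t = s.
Proof.
elim: s p t => [|x [|y r] IH] p t //.
rewrite adj_cons2 Mch_cons => /andP [Hxy Had].
case: ifP => H1.
  move=> /hdE [_ <-]; exists 1 => //.
  rewrite /vf; apply/andP; split; first by [].
  change (face 1 [:: x, sig p x y, y & r]) with [:: x, y & r].
  by rewrite !glen_cons2 addnA -(F_sig2 p Hxy H1).
case: ifP => Hev //.
case E: (Mch x (y :: r)) => [[b1 t1]|] // /hdE [Hb <-].
rewrite Hb in E.
have [i Hi Hf] := IH _ _ Had E.
have [r2 Et2] := Mch_head E.
have i0 : 0 < i by move: Hi; rewrite /vf => /andP [/andP [] ].
exists i.+1; last by rewrite face_cons Hf.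
by rewrite Et2 vf_cons // -Et2.
Qed.

Lemma Mch_unit (x y : V) r z r3 : adj_distinct (y :: r) ->
  Mch x (y :: r) = Some (true, y :: z :: r3) -> d y z = 1.
Proof.
case: r => [|w r'] //; rewrite adj_cons2 Mch_cons => /andP [Hyw _].
case: ifP => H1.
  move=> Heq; move: (tlE Heq) => {Heq} [<- _].
  exact: F_sig1.
case: ifP => Hev //.
case E: (Mch y (w :: r')) => [[b1 t1]|] // Heq; move: (tlE Heq) => {Heq} Et1.
have [t2 Et2] := Mch_head E.
by move: Et1; rewrite Et2 => -[<- _]; apply: d1E.
Qed.

Lemma arith1 a c X P : a < c -> P < X -> a.+1 * X + P < c.+1 * X.
Proof.
move=> Hac HP; apply: (@leq_trans (a.+2 * X)).
  by rewrite [a.+2 * X]mulSn; lia.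
by rewrite leq_mul2r ltnS Hac orbT.
Qed.

Lemma Psi_u p (x y : V) r : d x y = 1 ->
  Psi p (x :: y :: r) = (rk p x y).+1 * B ^ size r + Psi x (y :: r).
Proof. by move=> H; rewrite Psi_cons H. Qed.
Lemma Psi_l p (x y : V) r : d x y != 1 ->
  Psi p (x :: y :: r) = (rk p x (sig p x y)).+1 * B ^ size r.
Proof. by move=> H; rewrite Psi_cons H. Qed.
Lemma Mch_u p (x y : V) r : d x y = 1 -> Mch p (x :: y :: r) =
  if ev p x y r then Some (false, x :: r) else consM x (Mch x (y :: r)).
Proof. by move=> H; rewrite Mch_cons H. Qed.

Lemma Mch_grad p s t i u : adj_distinct s -> Mch p s = Some (true, t) -> vf i t ->
  face i t != s -> Mch p (face i t) = Some (true, u) -> Psi p s < Psi p (face i t).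
Proof.
elim: s p t i u => [|x [|y r] IH] p t i u //.
rewrite adj_cons2 => /andP [Hxy Had].
rewrite Mch_cons; case: ifP => H1.
  move=> /hdE [_ <-].
  have Dxv := F_sig1 p Hxy H1.
  case: i => [|[|[|i]]] //.
  - by move=> _; rewrite /= eqxx.
  - case: r Had {IH} => [|z r'] // Had _ _ _.
    change (face 2 [:: x, sig p x y, y, z & r']) with [:: x, sig p x y, z & r'].
    rewrite Psi_l // Psi_u //.
    by rewrite -[X in X < _]addn0 ltn_add2l Psi_pos.
  - move=> _ _; change (face i.+3 [:: x, sig p x y, y & r]) with [:: x, sig p x y, y & face i r].
    rewrite Mch_u //.
    have -> : ev p x (sig p x y) (y :: face i r) by rewrite /ev -(F_sig2 p Hxy H1) !eqxx.
    by [].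
case: ifP => Hev //.
case E: (Mch x (y :: r)) => [[b1 t1]|] // /hdE [Hb <-].
rewrite Hb in E.
have [r2 Et2] := Mch_head E.
have Dxy := d1E H1.
have Sz := Mch_size E; rewrite Et2 /= in Sz; case: Sz => Sz.
case: i => [|[|i]] //.
-
  case: r2 Et2 Sz => [|z r3] Et2 Sz //.
  rewrite Et2 vf1 Dxy => /eqP Dxz.
  have E' : Mch x (y :: r) = Some (true, y :: z :: r3) by rewrite E Et2.
  have Dyz : d y z = 1 := Mch_unit Had E'.
  rewrite Dyz in Dxz.
  have Hc := Mch_coh p Dxy Had E'; rewrite Hev /ev Dxz Dxy Dyz eqxx /= in Hc.
  move=> _ _; change (face 1 [:: x, y, z & r3]) with [:: x, z & r3].
  rewrite Psi_u // Psi_l ?Dxz //.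
  have Hsr : size r3 = size r by move: Sz => /= [].
  rewrite Hsr; apply: arith1; last exact: (Psi_bound x (y :: r)).
  apply: F_rank => //.
  by rewrite -Hc.
-
  rewrite Et2 vf_cons // => Hvf Hne.
  have Hne' : face i.+1 t1 != y :: r.
    by apply: contraNneq Hne => Hf; rewrite face_cons -Et2 Hf.
  rewrite face_cons.
  change (face i.+1 (y :: r2)) with (y :: face i r2).
  rewrite Mch_u //; case: ifP => Hev2 //.
  case E2: (Mch x (y :: face i r2)) => [[b2 u2]|] // /hdE [Hb2 _].
  rewrite Hb2 in E2.
  have Hvf' : vf i.+1 t1 by rewrite Et2.
  have HI := IH x t1 i.+1 u2 Had E Hvf' Hne'.
  rewrite Et2 in HI; change (face i.+1 (y :: r2)) with (y :: face i r2) in HI.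
  have {}HI := HI E2.
  rewrite !Psi_u //.
  have Hi : i < size r2.
    by move: Hvf; rewrite /vf => /andP [/andP [_ H] _]; apply: ltnW.
  rewrite size_face // Sz /=.
  by rewrite ltn_add2l.
Qed.

Lemma nth_face (x0 : V) i (s : seq V) n : i < size s ->
  nth x0 (face i s) n = nth x0 s (if n < i then n else n.+1).
Proof.
move=> Hi; rewrite /face nth_cat size_take Hi.
case: ltnP => Hn; first by rewrite nth_take.
by rewrite nth_drop; congr nth; lia.
Qed.

Lemma adj_nth (x0 : V) (s : seq V) i : adj_distinct s -> i.+1 < size s -> nth x0 s i != nth x0 s i.+1.
Proof.
case: s => [|x s'] //= /(pathP x0) H Hi.
exact: H.
Qed.

Lemma face_inj (s : seq V) i j : adj_distinct s -> i < j -> j < size s -> face i s != face j s.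
Proof.
move=> Had Hij Hj; apply/eqP => Hf.
have := congr1 (nth ord0 ^~ i) Hf.
rewrite !nth_face ?ltnn ?Hij //; last by apply: ltn_trans Hj.
by apply/eqP; rewrite eq_sym adj_nth // (leq_ltn_trans Hij).
Qed.

Lemma vf_size i (s : seq V) : vf i s -> 0 < i /\ i < (size s).-1.
Proof. by rewrite /vf => /andP [/andP [H1 H2] _]. Qed.

Lemma vf_adj i (s : seq V) : adj_distinct s -> vf i s -> adj_distinct (face i s).
Proof.
elim: s i => [|x [|y t] IH] i //; first by move=> _; rewrite /vf ltn0 andbF.
rewrite adj_cons2 => /andP [Hxy Had].
case: i => [|[|i]] //.
  case: t Had {IH} => [|z t'] //; rewrite adj_cons2 vf1 => /andP [Hyz Had] /eqP Hd.
  change (face 1 [:: x, y, z & t']) with [:: x, z & t'].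
  rewrite adj_cons2 Had andbT F_neq // Hd.
  by rewrite addn_gt0 lt0n F_d0 Hxy.
rewrite vf_cons // => Hvf.
rewrite face_cons.
have := IH _ Had Hvf; change (face i.+1 (y :: t)) with (y :: face i t) => H.
by rewrite adj_cons2 Hxy H.
Qed.

Lemma glen_ge (s : seq V) : adj_distinct s -> (size s).-1 <= gl s.
Proof.
elim: s => [|x [|y t] IH] //.
rewrite adj_cons2 => /andP [Hxy Had].
rewrite glen_cons2 /=.
have := IH Had; rewrite /= => H.
by rewrite -add1n leq_add // lt0n F_d0.
Qed.

Lemma inI_face k l (s : seq V) i : inI ico_edge k.+1 l s -> vf i s -> inI ico_edge k l (face i s).
Proof.
move=> /and3P [/eqP Hs Had /eqP Hl] Hvf.
have [H0 Hi] := vf_size Hvf.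
apply/and3P; split.
- by rewrite size_face Hs //; rewrite Hs in Hi; apply: (ltn_trans Hi).
- exact: vf_adj.
- by move: Hvf; rewrite /vf Hl => /andP [_ /eqP ->].
Qed.

Local Open Scope ring_scope.

Lemma coeff_face k (s : seq V) i : adj_distinct s -> size s = k.+1 -> vf i s ->
  bd_coeff ico_edge k s (face i s) = (-1) ^+ i.
Proof.
move=> Had Hs Hvf; have [H0 Hi] := vf_size Hvf; rewrite Hs /= in Hi.
rewrite /bd_coeff (bigD1_seq i) /=; last 2 first.
- by rewrite mem_index_iota H0 Hi.
- exact: iota_uniq.
rewrite eqxx.
have -> : (gl (face i s) == gl s) by move: Hvf; rewrite /vf => /andP [].
rewrite /= big1_seq; first by rewrite addr0.
move=> j /andP [Hji Hj].
rewrite mem_index_iota in Hj.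
have Hj' : (j < size s)%N by rewrite Hs; apply: (ltn_trans (andP Hj).2).
have Hi' : (i < size s)%N by rewrite Hs; apply: (ltn_trans Hi).
case: (ltngtP j i) Hji => // Hc _.
- by rewrite (negbTE (face_inj Had Hc Hi')).
- by rewrite eq_sym (negbTE (face_inj Had Hc Hj')).
Qed.

Lemma coeff_nz k (s t : seq V) : size s = k.+1 -> bd_coeff ico_edge k s t != 0 ->
  exists2 i, vf i s & face i s = t.
Proof.
move=> Hs Hnz.
have : ~~ all (fun i => (face i s == t) && (gl (face i s) == gl s) == false) (index_iota 1 k).
  apply: contra Hnz => /allP H; apply/eqP; rewrite /bd_coeff big1_seq //.
  by move=> i /andP [_ Hi]; rewrite (eqP (H i Hi)).
case/allPn => i Hi; rewrite eqbF_neg negbK => /andP [/eqP Hf Hg].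
exists i => //; rewrite /vf Hg andbT Hs /=.
by rewrite mem_index_iota in Hi.
Qed.

Lemma coeff_sq (i : nat) : ((-1) ^+ i) * ((-1) ^+ i) = 1 :> int.
Proof. by rewrite -exprMn mulrNN mulr1 expr1n. Qed.

Lemma bdB k (c1 c2 : chain V) t :
  bd ico_edge k (fun s => c1 s - c2 s) t = bd ico_edge k c1 t - bd ico_edge k c2 t.
Proof. by rewrite /bd -sumrB; apply: eq_bigr => s _; rewrite mulrBl. Qed.

Lemma bdD k (c1 c2 : chain V) t :
  bd ico_edge k (fun s => c1 s + c2 s) t = bd ico_edge k c1 t + bd ico_edge k c2 t.
Proof. by rewrite /bd -big_split; apply: eq_bigr => s _; rewrite mulrDl. Qed.

Lemma bd0 k t : bd ico_edge k (fun _ => 0) t = 0.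
Proof. by rewrite /bd big1 // => s _; rewrite mul0r. Qed.

Lemma face_comm (s : seq V) i j : (i <= j)%N -> (j.+1 < size s)%N ->
  face i (face j.+1 s) = face j (face i s).
Proof.
move=> Hij Hj.
have Hsz1 : size (face j.+1 s) = (size s).-1 by rewrite size_face // ltnW.
have Hsz2 : size (face i s) = (size s).-1.
  by rewrite size_face //; apply: (leq_ltn_trans Hij); apply: ltnW.
apply: (eq_from_nth (x0 := ord0)).
  rewrite size_face ?Hsz1; last by lia.
  by rewrite size_face ?Hsz2 //; lia.
move=> n Hn.
rewrite nth_face ?Hsz1; last by lia.
rewrite nth_face; last by lia.
rewrite nth_face; last by rewrite Hsz2; lia.
rewrite nth_face; last by lia.
congr nth.
by case: (ltnP n i) => H1; case: (ltnP n j) => H2 /=; do ?case: ifP => ?; lia.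
Qed.

Lemma glen_face_le (s : seq V) i : (0 < i < (size s).-1)%N -> (gl (face i s) <= gl s)%N.
Proof.
elim: s i => [|x [|y t] IH] i //; first by rewrite ltn0 andbF.
case: i => [|[|i]] //.
  case: t {IH} => [|z t'] // _.
  change (face 1 [:: x, y, z & t']) with [:: x, z & t'].
  by rewrite !glen_cons2 addnA leq_add2r F_tri.
move=> Hi; rewrite face_cons.
change (face i.+1 (y :: t)) with (y :: face i t).
rewrite !glen_cons2 leq_add2l.
have := IH i.+1; change (face i.+1 (y :: t)) with (y :: face i t); apply.
by move: Hi => /=; lia.
Qed.

Lemma sum_antisym n (G : nat -> nat -> int) :
  (forall i j, (i <= j < n)%N -> G i j = - G j.+1 i) ->
  \sum_(i < n.+1) \sum_(j < n) G i j = 0.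
Proof.
move=> HG.
have Hsplit : forall i : 'I_n.+1, \sum_(j < n) G i j =
   \sum_(j < n) (if (j < i)%N then G i j else 0) + \sum_(j < n) (if (i <= j)%N then G i j else 0).
  move=> i; rewrite -big_split /=; apply: eq_bigr => j _.
  by case: ltnP => _; rewrite ?addr0 ?add0r.
rewrite (eq_bigr _ (fun i _ => Hsplit i)) big_split /=.
rewrite big_ord_recl /= big1_eq add0r.
rewrite [X in _ + X]big_ord_recr /= [X in _ + (_ + X)]big1 ?addr0; last first.
  by move=> j _; rewrite leqNgt ltn_ord.
rewrite exchange_big /=.
rewrite -[X in X + _]opprK; apply/eqP; rewrite addrC subr_eq0 -sumrN; apply/eqP.
apply: eq_bigr => i _; rewrite -sumrN; apply: eq_bigr => j _.
rewrite /bump leq0n add1n ltnS.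
case: ifP => H; last by rewrite oppr0.
by rewrite HG // H ltn_ord.
Qed.

Lemma sum1 (n : nat) (f : nat -> int) :
  \sum_(1 <= i < n) f i = \sum_(i < n) (if (0 < i)%N then f i else 0).
Proof.
case: n => [|n]; first by rewrite big_ord0 big_geq.
by rewrite big_ord_recl /= add0r big_add1 /= big_mkord.
Qed.

Lemma sum_tuple_eq n (v : seq V) (F : seq V -> int) : size v = n ->
  \sum_(u : n.-tuple V) (if tval u == v then F (tval u) else 0) = F v.
Proof.
move=> Hv; have Hv' : size v == n by rewrite Hv.
rewrite (bigD1 (Tuple Hv')) //= eqxx big1 ?addr0 // => u Hu.
by rewrite ifN //; apply: contra Hu => /eqP H; apply/eqP/val_inj.
Qed.

Lemma sum_tuple_eq' n (v : seq V) (F : seq V -> int) (c : bool) (a : int) : size v = n ->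
  \sum_(u : n.-tuple V) (if (v == tval u) && c then a else 0) * F (tval u) =
  if c then a * F v else 0.
Proof.
move=> Hv.
rewrite -(sum_tuple_eq (fun w => if c then a * F w else 0) Hv).
apply: eq_bigr => u _; rewrite eq_sym.
by case: (tval u == v); case: c; rewrite ?mul0r.
Qed.

Lemma bd_bd k (b : chain V) t : bd ico_edge k (bd ico_edge k.+1 b) t = 0.
Proof.
rewrite /bd.
under eq_bigr => u _ do rewrite mulr_suml.
rewrite exchange_big /=.
apply: big1 => s _.
under eq_bigr => u _ do rewrite -mulrA.
rewrite -mulr_sumr.
suff -> : \sum_(u : (k.+1).-tuple V) bd_coeff ico_edge k.+1 s u * bd_coeff ico_edge k u t = 0.
  by rewrite mulr0.
have Hs : size s = k.+2 := size_tuple s.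
rewrite {1}/bd_coeff.
under eq_bigr => u _ do rewrite big_distrl /=.
rewrite exchange_big /=.
pose T i j := if (face j (face i (tval s)) == t) && (gl (face j (face i (tval s))) == gl (tval s))
              then (-1) ^+ (i + j) else 0 : int.
have HT : forall i, (0 < i < k.+1)%N ->
   \sum_(u : (k.+1).-tuple V) (if (face i s == u) && (gl (face i s) == gl s) then (-1) ^+ i else 0)
      * bd_coeff ico_edge k u t = \sum_(1 <= j < k) T i j.
  move=> i Hi.
  have Hfi : size (face i s) = k.+1 by rewrite size_face Hs //; lia.
  rewrite (sum_tuple_eq' (fun w => bd_coeff ico_edge k w t) _ _ Hfi).
  have Hle2 : (gl (face i s) <= gl s)%N by apply: glen_face_le; rewrite Hs; lia.
  case E1: (gl (face i s) == gl s).
    rewrite /bd_coeff mulr_sumr; apply: eq_big_nat => j Hj.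
    have Hle1 : (gl (face j (face i s)) <= gl (face i s))%N.
      by apply: glen_face_le; rewrite Hfi; lia.
    rewrite /T (eqP E1); case: (face j (face i s) == t) => /=; last by rewrite mulr0.
    by case: ifP; rewrite ?mulr0 // exprD.
  apply/esym/big1_seq => j /andP [_ Hj]; rewrite mem_index_iota in Hj.
  have Hle1 : (gl (face j (face i s)) <= gl (face i s))%N.
    by apply: glen_face_le; rewrite Hfi; lia.
  rewrite /T; case: (face j (face i s) == t) => //=.
  case E3: (gl (face j (face i s)) == gl s) => //.
  move: E1 E3 => /negbT /eqP E1 /eqP E3; exfalso; apply: E1; lia.
rewrite (eq_big_nat _ _ HT) sum1.
pose G i j := if (0 < i)%N && (0 < j)%N then T i j else 0.
rewrite (eq_bigr (fun i : 'I_k.+1 => \sum_(j < k) G i j)); last first.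
  move=> i _; rewrite sum1 /G; case: (0 < i)%N => //=.
  by rewrite big1.
apply: sum_antisym => i j /andP [Hij Hj].
rewrite /G; case: (posnP i) => [->|Hi] /=; first by rewrite oppr0.
have Hj0 : (0 < j)%N by apply: leq_trans Hij.
rewrite Hj0 /= /T face_comm // ?Hs; last by lia.
rewrite [(j.+1 + i)%N]addSn addnC exprS.
by case: ifP; rewrite ?mulN1r ?opprK ?oppr0.
Qed.

Definition Mt (s : seq V) := if s is x :: _ then Mch x s else None.
Definition Ps (s : seq V) : nat := if s is x :: _ then Psi x s else 0%N.
Definition lowerb (s : seq V) := if Mt s is Some (true, _) then true else false.

Lemma Mt_head s b t : Mt s = Some (b, t) -> exists x s1 t1, s = x :: s1 /\ t = x :: t1.
Proof.
case: s => [|x s1] //= H; have [t1 ->] := Mch_head H.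
by exists x, s1, t1.
Qed.

Lemma Mt_inv s b t : adj_distinct s -> Mt s = Some (b,t) -> Mt t = Some (~~ b, s).
Proof.
case: s => [|x s1] // Had H; have [t1 Et] := Mch_head H.
rewrite Et; change (Mt (x :: t1)) with (Mch x (x :: t1)); rewrite -Et.
exact: Mch_inv Had H.
Qed.

Lemma Mt_size s b t : Mt s = Some (b,t) -> size t = if b then (size s).+1 else (size s).-1.
Proof. by case: s => [|x s1] // H; apply: Mch_size H. Qed.
Lemma Mt_glen s b t : adj_distinct s -> Mt s = Some (b,t) -> gl t = gl s.
Proof. by case: s => [|x s1] // Had H; apply: Mch_glen Had H. Qed.
Lemma Mt_adj s b t : adj_distinct s -> Mt s = Some (b,t) -> adj_distinct t.
Proof. by case: s => [|x s1] // Had H; apply: Mch_adj Had H. Qed.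
Lemma Mt_face s t : adj_distinct s -> Mt s = Some (true,t) -> exists2 i, vf i t & face i t = s.
Proof. by case: s => [|x s1] // Had H; apply: Mch_face Had H. Qed.
Lemma Mt_none s : adj_distinct s -> Mt s = None -> gl s = (size s).-1.
Proof. by case: s => [|x s1] // Had H; apply: Mch_none Had H. Qed.
Lemma Ps_bound s : (Ps s < B ^ (size s).-1)%N.
Proof. by case: s => [|x s1] //; apply: Psi_bound. Qed.

Lemma Mt_grad x y i u : adj_distinct x -> Mt x = Some (true, y) -> vf i y ->
  face i y != x -> Mt (face i y) = Some (true, u) -> (Ps x < Ps (face i y))%N.
Proof.
case: x => [|a x1] // Had H Hvf Hne.
have [y1 Ey] := Mch_head H.
have [Hi0 _] := vf_size Hvf.
case: i Hi0 Hvf Hne => // i _ Hvf Hne.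
have Hf : face i.+1 y = a :: face i y1 by rewrite Ey.
have HG := Mch_grad (u := u) Had H Hvf Hne.
rewrite Hf in HG *; move=> H2.
exact: HG H2.
Qed.

Lemma sum_nz (I : finType) (F : I -> int) : \sum_i F i != 0 -> exists i, F i != 0.
Proof.
case: (pickP (fun i => F i != 0)) => [i Hi|H0]; first by exists i.
by rewrite big1 ?eqxx // => i _; apply/eqP; move: (H0 i) => /negbFE.
Qed.

Lemma noncrit k l s : (k < l)%N -> inI ico_edge k l s -> Mt s != None.
Proof.
move=> Hkl /and3P [/eqP Hs Had /eqP Hl]; apply/eqP => H.
have := Mt_none Had H; rewrite Hl Hs /=; lia.
Qed.

Lemma tupleP_of (n : nat) (s : seq V) : size s = n -> exists u : n.-tuple V, tval u = s.
Proof.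
move=> Hs; have Hs' : size s == n by rewrite Hs.
by exists (Tuple Hs').
Qed.

Lemma base_case k l (c : chain V) : (k < l)%N -> supported ico_edge k l c ->
  (forall t, bd ico_edge k c t = 0) -> (forall x, c x != 0 -> ~~ lowerb x) ->
  forall s, c s = 0.
Proof.
move=> Hkl Hsup Hcyc Hlow s0; apply/eqP; apply: contraT => Hs0.
pose P m := [exists y : (k.+1).-tuple V, (c y != 0) &&
              (if Mt y is Some (false, w) then Ps w == m else false)].
have Hup : forall z, c z != 0 -> exists w, Mt z = Some (false, w).
  move=> z Hz; have Hi := Hsup z Hz.
  have := noncrit Hkl Hi; have := Hlow z Hz; rewrite /lowerb.
  by case: (Mt z) => [[[] w]|] // _ _; exists w.
have Pex : exists m, P m.
  have [w Hw] := Hup s0 Hs0.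
  have /and3P [/eqP Hs _ _] := Hsup s0 Hs0.
  have [u Hu] := tupleP_of Hs.
  by exists (Ps w); apply/existsP; exists u; rewrite Hu Hs0 Hw eqxx.
case: (ex_minnP Pex) => m /existsP [y /andP [Hy Hm]] Hmin.
case Ey: (Mt y) Hm => [[[] w]|] //= /eqP Hwm.
have /and3P [/eqP Hsy Hady /eqP Hly] := Hsup y Hy.
have Hw := Mt_inv Hady Ey.
have Hadw := Mt_adj Hady Ey.
have [i Hvf Hfi] := Mt_face Hadw Hw.
have := Hcyc w; rewrite /bd (bigD1 y) //=.
rewrite big1 ?addr0; last first.
  move=> z Hzy; case Hz: (c z == 0); first by rewrite (eqP Hz) mul0r.
  move/negbT: Hz => Hz.
  case Hc: (bd_coeff ico_edge k z w == 0); first by rewrite (eqP Hc) mulr0.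
  move/negbT: Hc => Hc; exfalso.
  have /and3P [/eqP Hsz Hadz _] := Hsup z Hz.
  have [j Hvfj Hfj] := coeff_nz Hsz Hc.
  have [w' Ew'] := Hup z Hz.
  have Hw' := Mt_inv Hadz Ew'.
  have Hadw' := Mt_adj Hadz Ew'.
  have Hne : face j z != w'.
    rewrite Hfj; apply/eqP => Hww; move: Hw'; rewrite -Hww Hw => -[Hzy'].
    by move: Hzy => /eqP; apply; apply: val_inj.
  have := Mt_grad Hadw' Hw' Hvfj Hne; rewrite Hfj => /(_ _ Hw) Hlt.
  have : P (Ps w') by apply/existsP; exists z; rewrite Hz Ew' eqxx.
  by move/Hmin; rewrite -Hwm; lia.
rewrite -Hfi coeff_face //.
move/eqP; rewrite mulf_eq0 expf_eq0 oppr_eq0 oner_eq0 andbF orbF.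
by rewrite (negbTE Hy).
Qed.

Lemma morse_ind k l (Hkl : (k < l)%N) n : forall (th : nat) (c : chain V),
  supported ico_edge k l c -> (forall t, bd ico_edge k c t = 0) ->
  (forall x, c x != 0 -> lowerb x -> (th <= Ps x)%N) -> (B ^ k <= th + n)%N ->
  exists b : chain V, supported ico_edge k.+1 l b /\ forall t, bd ico_edge k.+1 b t = c t.
Proof.
elim: n => [|n IH] th c Hsup Hcyc Hlow Hn.
  exists (fun _ => 0); split; first by move=> s; rewrite eqxx.
  move=> t; rewrite bd0 (base_case Hkl Hsup Hcyc) //.
  move=> x Hx; apply/negP => Hl; have := Hlow x Hx Hl.
  have /and3P [/eqP Hs _ _] := Hsup x Hx.
  have := Ps_bound x; rewrite Hs /=; lia.
pose b0 : chain V := fun y => if inI ico_edge k.+1 l y then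
   (if Mt y is Some (false, x) then (if Ps x == th then c x * bd_coeff ico_edge k.+1 y x else 0)
    else 0) else 0.
pose c' : chain V := fun s => c s - bd ico_edge k.+1 b0 s.
have Hb0sup : supported ico_edge k.+1 l b0.
  by move=> y; rewrite /b0; case: ifP.
have Hb0 : forall (t y : seq V), b0 y * bd_coeff ico_edge k.+1 y t != 0 ->
   exists x, [/\ Mt y = Some (false, x), Ps x = th, c x != 0, inI ico_edge k l x
     & (Mt x = Some (true, y) /\ exists2 i, vf i y & face i y = t)].
  move=> t y; rewrite /b0; case: ifP => Hiy; last by rewrite mul0r eqxx.
  case Ey: (Mt y) => [[[] x]|] /=; rewrite ?mul0r ?eqxx //.
  case: ifP => /eqP Hx; last by rewrite mul0r eqxx.
  rewrite mulf_eq0 negb_or => /andP [Hcx Hct].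
  have /and3P [/eqP Hsy Hady _] := Hiy.
  rewrite mulf_eq0 negb_or in Hcx; case/andP: Hcx => Hcx _.
  exists x; split => //.
  - exact: Hsup.
  - split; first exact: Mt_inv Hady Ey.
    exact: coeff_nz Hsy Hct.
have Hbd0 : forall t, bd ico_edge k.+1 b0 t != 0 -> exists x y,
   [/\ Mt y = Some (false, x), Ps x = th, c x != 0, inI ico_edge k l x
     & (Mt x = Some (true, y) /\ exists2 i, vf i y & face i y = t)].
  move=> t /sum_nz [y Hy]; have [x Hx] := Hb0 _ _ Hy.
  by exists x, (tval y).
have Hc'sup : supported ico_edge k l c'.
  move=> t; rewrite /c'; case Hct: (c t == 0).
    rewrite (eqP Hct) sub0r oppr_eq0 => /Hbd0 [x [y [Ey _ _ Hix [Hx [i Hvf Hf]]]]].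
    rewrite -Hf; apply: inI_face Hvf.
    have /and3P [/eqP Hsx Hadx /eqP Hlx] := Hix.
    apply/and3P; split.
    - by rewrite (Mt_size Hx) Hsx.
    - exact: Mt_adj Hadx Hx.
    - by rewrite (Mt_glen Hadx Hx) Hlx.
  by move=> _; apply: Hsup; rewrite Hct.
have Hc'cyc : forall t, bd ico_edge k c' t = 0.
  by move=> t; rewrite /c' bdB Hcyc bd_bd subr0.
have Hc'low : forall x, c' x != 0 -> lowerb x -> (th.+1 <= Ps x)%N.
  move=> x Hx; rewrite /lowerb; case Ex: (Mt x) => [[[] y]|] // _.
  case Hcx: (c x == 0).
    move: Hx; rewrite /c' (eqP Hcx) sub0r oppr_eq0.
    move=> /Hbd0 [x' [y' [Ey' Hpx' Hcx' Hix' [Hx' [i Hvf Hf]]]]].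
    have /and3P [_ Hadx' _] := Hix'.
    have Hne : face i y' != x'.
      by rewrite Hf; apply: contraNneq Hcx' => <-; rewrite (eqP Hcx).
    have := Mt_grad Hadx' Hx' Hvf Hne; rewrite Hf => /(_ _ Ex).
    by rewrite Hpx'.
  move/negbT: Hcx => Hcx.
  have := Hlow x Hcx; rewrite /lowerb Ex => /(_ isT).
  rewrite leq_eqVlt => /orP [/eqP Hth|//].
  exfalso; move: Hx; rewrite /c'.
  have /and3P [/eqP Hsx Hadx /eqP Hlx] := Hsup x Hcx.
  have Hsy : size y = k.+2 by rewrite (Mt_size Ex) Hsx.
  have Hiy : inI ico_edge k.+1 l y.
    apply/and3P; split; first by rewrite Hsy.
    - exact: Mt_adj Hadx Ex.
    - by rewrite (Mt_glen Hadx Ex) Hlx.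
  have Ey : Mt y = Some (false, x) := Mt_inv Hadx Ex.
  have [i Hvf Hf] := Mt_face Hadx Ex.
  have [u Hu] := tupleP_of Hsy.
  rewrite /bd (bigD1 u) //= big1 ?addr0.
    rewrite Hu /b0 Hiy Ey -Hth eqxx -Hf coeff_face //; last exact: (Mt_adj Hadx Ex).
    by rewrite -mulrA coeff_sq mulr1 Hf subrr eqxx.
  move=> u' Hu'; apply/eqP; apply: contraT => Hnz.
  have [x' [Ey' Hpx' Hcx' Hix' [Hx' [j Hvfj Hfj]]]] := Hb0 _ _ Hnz.
  have /and3P [_ Hadx' _] := Hix'.
  have Hne : face j u' != x'.
    rewrite Hfj; apply/eqP => Exx; move: Hx'; rewrite -Exx Ex => -[Hyu].
    by move: Hu' => /eqP; apply; apply: val_inj; rewrite /= -Hyu Hu.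
  have := Mt_grad Hadx' Hx' Hvfj Hne; rewrite Hfj => /(_ _ Ex).
  by rewrite Hpx' -Hth ltnn.
have Hn' : (B ^ k <= th.+1 + n)%N by rewrite addSnnS.
have [b' [Hb'sup Hb'bd]] := IH th.+1 c' Hc'sup Hc'cyc Hc'low Hn'.
exists (fun s => b' s + b0 s); split.
  move=> s Hs; case Hb': (b' s == 0).
    by apply: Hb0sup; move: Hs; rewrite (eqP Hb') add0r.
  by apply: Hb'sup; rewrite Hb'.
by move=> t; rewrite bdD Hb'bd /c' subrK.
Qed.

Theorem theorem3p4 : diagonal ico_edge.
Proof.
move=> k l Hkl c Hsup Hcyc.
case: (ltngtP k l) Hkl => // H _.
  by apply: (morse_ind H (n := B ^ k) (th := 0%N)).
exists (fun _ => 0); split; first by move=> s; rewrite eqxx.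
move=> t; rewrite bd0; apply/esym/eqP; apply: contraT => Ht.
have /and3P [/eqP Hs Had /eqP Hl] := Hsup t Ht.
have := glen_ge Had; rewrite Hs Hl /=; lia.
Qed.
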